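(* Let $d\ge1$, $m\ge1$, $\nu\ge2$ be integers, $\Lambda\subset\mathbb Z^d$ finite, containing $\mathbf 0$ and symmetric, $\boldsymbol\Sigma=\{\Sigma_{\mathbf k}\}_{\mathbf k\in\Lambda}$ with $\Sigma_{-\mathbf k}=\Sigma_{\mathbf k}^*\in\mathbb C^{m\times m}$, and $\Psi$ an $m\times m$ matrix-valued function on $\mathbb T^d$ with rational entries which is bounded and coercive. Assume the Feasibility Assumption, and let $\mathbf Q^\circ\in\partial\mathscr L_+$ be the unique minimizer of $J_\nu$ over $\mathscr L_+$. Let $K(\mathbf Q^\circ)=\{\boldsymbol\Sigma_K:\ \langle\boldsymbol\Sigma_K,\mathbf Q-\mathbf Q^\circ\rangle\le0\text{ for all }\mathbf Q\in\mathscr L_+\}$. If $\boldsymbol\Sigma_K\in K(\mathbf Q^\circ)$, then $-\boldsymbol\Sigma_K\in\overline{\mathfrak C}_+$, the closure of $$\mathfrak C_+=\{\boldsymbol\Sigma:\ \langle\boldsymbol\Sigma,\mathbf Q\rangle>0\text{ for all }\mathbf Q\neq0\text{ such that }Q(e^{i\boldsymbol\theta})\ge0\ \forall\boldsymbol\theta\in\mathbb T^d\}.$$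
   Context: $\mathbb T^d=(-\pi,\pi]^d$, $\mathrm d\mu=(2\pi)^{-d}\prod_j\mathrm d\theta_j$; bounded and coercive means $aI_m\le\Psi\le bI_m$ on $\mathbb T^d$ for some $b>a>0$. All $\mathbf Q$ and $\boldsymbol\Sigma$'s are families $\{Q_{\mathbf k}\}_{\mathbf k\in\Lambda}$ of $m\times m$ complex matrices with $Q_{-\mathbf k}=Q_{\mathbf k}^*$; $Q(e^{i\boldsymbol\theta})=\sum_{\mathbf k}Q_{\mathbf k}e^{-i\langle\mathbf k,\boldsymbol\theta\rangle}$, $\langle\mathbf k,\boldsymbol\theta\rangle=\sum_jk_j\theta_j$, and $\langle\mathbf Q,\boldsymbol\Sigma\rangle=\sum_{\mathbf k}\operatorname{tr}(Q_{\mathbf k}\Sigma_{\mathbf k}^* )$. $\mathscr L_+=\{\mathbf Q:\nu\Psi^{-1}+Q\ge0\text{ on }\mathbb T^d,\ \text{not identically zero}\}$, with boundary $\partial\mathscr L_+$ the set of those $\mathbf Q$ with $\Psi^{-1}+\frac1\nu Q$ positive semidefinite on $\mathbb T^d$ and singular somewhere. $J_\nu(\mathbf Q)=\langle\mathbf Q,\boldsymbol\Sigma\rangle+\frac{\nu}{\nu-1}\int_{\mathbb T^d}\operatorname{tr}\{[\Psi^{-1}(\Psi^{-1}+\frac1\nu Q)^{-1}]^{\nu-1}\}\mathrm d\mu$ (integral over the complement of the null set where the determinant vanishes). Feasibility Assumption: there is a Hermitian nonnegative definite matrix-valued measure $M_0$ with $\int e^{i\langle\mathbf k,\boldsymbol\theta\rangle}\mathrm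 dM_0=\Sigma_{\mathbf k}$ for all $\mathbf k\in\Lambda$, and a nonnegative scalar measure $\lambda$ with $\mathrm dM_0=M'_{0,\lambda}\mathrm d\lambda$, $M'_{0,\lambda}$ positive definite on an open ball $B$ with $\lambda(B)>0$. *)

(* Defs.v *)
From HB Require Import structures.
From mathcomp Require Import all_boot all_order all_algebra.
From mathcomp Require Import all_classical all_reals all_analysis.
From mathcomp Require Import complex.
From mathcomp Require Import finmap.

Set Implicit Arguments.
Unset Strict Implicit.
Unset Printing Implicit Defensive.

Import Order.TTheory GRing.Theory Num.Theory.
Local Open Scope ring_scope.
Local Open Scope classical_set_scope.

Section Defs.
Variable R : realType.
Local Notation C := (complex R).

Definition torus (d : nat) : set (d.-tuple R) :=
  [set th | forall i : 'I_d, - pi < tnth th i <= pi].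
Arguments torus : clear implicits.

Definition expi (t : R) : C := Complex (cos t) (sin t).

Definition kdot (d : nat) (k : d.-tuple int) (th : d.-tuple R) : R :=
  \sum_(j < d) (tnth k j)%:~R * tnth th j.

Definition negk (d : nat) (k : d.-tuple int) : d.-tuple int := map_tuple -%R k.

Definition ctr (m : nat) (A : 'M[C]_m) : 'M[C]_m := (map_mx (@conjc R) A)^T.

(* Hermitian positive semidefinite / positive definite, via the complex order *)
Definition psd (m : nat) (A : 'M[C]_m) : Prop :=
  forall v : 'cV[C]_m, 0 <= ((map_mx (@conjc R) v)^T *m A *m v) 0 0.
Definition pd (m : nat) (A : 'M[C]_m) : Prop :=
  forall v : 'cV[C]_m, v != 0 -> 0 < ((map_mx (@conjc R) v)^T *m A *m v) 0 0.

(* A family is represented by a function on Z^d; only its values on Lambda matter. *)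
Definition is_family (d m : nat) (Lam : {fset d.-tuple int})
  (Q : d.-tuple int -> 'M[C]_m) : Prop :=
  forall k, k \in Lam -> Q (negk k) = ctr (Q k).

Definition fam_eq (d m : nat) (Lam : {fset d.-tuple int})
  (Q Q' : d.-tuple int -> 'M[C]_m) : Prop :=
  forall k, k \in Lam -> Q k = Q' k.

Definition Qfun (d m : nat) (Lam : {fset d.-tuple int})
  (Q : d.-tuple int -> 'M[C]_m) (th : d.-tuple R) : 'M[C]_m :=
  \sum_(k <- Lam) expi (- kdot k th) *: Q k.

(* <Q, S> = sum_k tr (Q_k (S_k)^H)  (real for families; we take the real part) *)
Definition fam_ip (d m : nat) (Lam : {fset d.-tuple int})
  (Q S : d.-tuple int -> 'M[C]_m) : R :=
  complex.Re (\sum_(k <- Lam) \tr (Q k *m ctr (S k))).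

(* ---------- normalized integral over T^d (iterated, for nonnegative integrands) ---------- *)
Fixpoint torus_int (d : nat) : (d.-tuple R -> \bar R) -> \bar R :=
  match d with
  | 0 => fun f => f [tuple]
  | d'.+1 => fun f =>
      ((2 * pi)^-1)%:E *
      \int[@lebesgue_measure R]_(x in [set x : R | (- pi < x <= pi)%R])
         torus_int (fun t : d'.-tuple R => f [tuple of x :: t])
  end%E.

Definition trig_poly (d : nat) (s : seq (C * d.-tuple int)) (th : d.-tuple R) : C :=
  \sum_(ck <- s) ck.1 * expi (kdot ck.2 th).

Definition rational_entries (d m : nat) (Psi : d.-tuple R -> 'M[C]_m) : Prop :=
  forall i j : 'I_m, exists (p q : seq (C * d.-tuple int)),
    (forall th, torus d th -> trig_poly q th != 0) /\
    (forall th, torus d th -> Psi th i j = trig_poly p th / trig_poly q th).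

Definition bounded_coercive (d m : nat) (Psi : d.-tuple R -> 'M[C]_m) : Prop :=
  exists a b : R, 0 < a /\ a < b /\
    forall th, torus d th ->
      psd (Psi th - (Complex a 0)%:M) /\ psd ((Complex b 0)%:M - Psi th).

Definition Lplus (d m nu : nat) (Lam : {fset d.-tuple int})
  (Psi : d.-tuple R -> 'M[C]_m) (Q : d.-tuple int -> 'M[C]_m) : Prop :=
  is_family Lam Q /\
  (forall th, torus d th -> psd ((nu%:R : C) *: invmx (Psi th) + Qfun Lam Q th)) /\
  (exists th, torus d th /\ (nu%:R : C) *: invmx (Psi th) + Qfun Lam Q th != 0).

Definition dLplus (d m nu : nat) (Lam : {fset d.-tuple int})
  (Psi : d.-tuple R -> 'M[C]_m) (Q : d.-tuple int -> 'M[C]_m) : Prop :=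
  is_family Lam Q /\
  (forall th, torus d th -> psd (invmx (Psi th) + (nu%:R : C)^-1 *: Qfun Lam Q th)) /\
  (exists th, torus d th /\ \det (invmx (Psi th) + (nu%:R : C)^-1 *: Qfun Lam Q th) = 0).

(* integrand, set to 0 on the (null) set where the determinant vanishes *)
Definition J_integrand (d m nu : nat) (Lam : {fset d.-tuple int})
  (Psi : d.-tuple R -> 'M[C]_m) (Q : d.-tuple int -> 'M[C]_m) (th : d.-tuple R) : \bar R :=
  let A := invmx (Psi th) + (nu%:R : C)^-1 *: Qfun Lam Q th in
  if \det A != 0 then
    (complex.Re (\tr ((invmx (Psi th) *m invmx A) ^+ (nu.-1))))%:E
  else 0%E.

Definition J_nu (d m nu : nat) (Lam : {fset d.-tuple int})
  (Psi : d.-tuple R -> 'M[C]_m) (Sigma Q : d.-tuple int -> 'M[C]_m) : \bar R :=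
  ((fam_ip Lam Q Sigma)%:E +
   (nu%:R / (nu%:R - 1))%:E * torus_int (J_integrand nu Lam Psi Q))%E.

Definition cint (d : nat) (lam : {measure set (d.-tuple R) -> \bar R})
  (D : set (d.-tuple R)) (f : d.-tuple R -> C) : C :=
  Complex (Rintegral lam D (fun x => complex.Re (f x)))
          (Rintegral lam D (fun x => complex.Im (f x))).

Definition cintegrable (d : nat) (lam : {measure set (d.-tuple R) -> \bar R})
  (D : set (d.-tuple R)) (f : d.-tuple R -> C) : Prop :=
  lam.-integrable D (fun x => (complex.Re (f x))%:E) /\
  lam.-integrable D (fun x => (complex.Im (f x))%:E).

(* dM_0 = M' dlam, M' Hermitian psd, M' pd on an open ball B with lam(B) > 0,
   and int e^{i<k,theta>} dM_0 = Sigma_k for k in Lambda *)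
Definition feasible (d m : nat) (Lam : {fset d.-tuple int})
  (Sigma : d.-tuple int -> 'M[C]_m) : Prop :=
  exists (lam : {measure set (d.-tuple R) -> \bar R}) (M' : d.-tuple R -> 'M[C]_m),
    (forall th, torus d th -> psd (M' th)) /\
    (forall k, k \in Lam -> forall i j : 'I_m,
       cintegrable lam (torus d) (fun th => expi (kdot k th) * M' th i j) /\
       Sigma k i j = cint lam (torus d) (fun th => expi (kdot k th) * M' th i j)) /\
    (exists (c : d.-tuple R) (r : R), 0 < r /\
       let B := [set th | torus d th /\
                   \sum_(i < d) (tnth th i - tnth c i) ^+ 2 < r ^+ 2] in
       (0 < lam B)%E /\ (forall th, B th -> pd (M' th))).

Definition Cplus (d m : nat) (Lam : {fset d.-tuple int})
  (S : d.-tuple int -> 'M[C]_m) : Prop :=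
  is_family Lam S /\
  forall Q : d.-tuple int -> 'M[C]_m, is_family Lam Q ->
    (exists k, k \in Lam /\ Q k != 0) ->
    (forall th, torus d th -> psd (Qfun Lam Q th)) ->
    0 < fam_ip Lam S Q.

Definition fam_closure (d m : nat) (Lam : {fset d.-tuple int})
  (P : (d.-tuple int -> 'M[C]_m) -> Prop) (S : d.-tuple int -> 'M[C]_m) : Prop :=
  forall eps : R, 0 < eps -> exists S', P S' /\
    forall k, k \in Lam -> forall i j : 'I_m, `|S' k i j - S k i j| < Complex eps 0.

Definition normal_cone (d m nu : nat) (Lam : {fset d.-tuple int})
  (Psi : d.-tuple R -> 'M[C]_m) (Q0 SK : d.-tuple int -> 'M[C]_m) : Prop :=
  is_family Lam SK /\
  forall Q, Lplus nu Lam Psi Q -> fam_ip Lam SK (fun k => Q k - Q0 k) <= 0.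

End Defs.

(* Main.v *)
Require Import Defs.
From HB Require Import structures.
From mathcomp Require Import all_boot all_order all_algebra.
From mathcomp Require Import all_classical all_reals all_analysis.
From mathcomp Require Import complex.
From mathcomp Require Import finmap.
From mathcomp Require Import ring lra.
Import Order.TTheory GRing.Theory Num.Theory.
Local Open Scope ring_scope.
Local Open Scope classical_set_scope.

Section S.
Variable R : realType.
Local Notation C := (complex R).

Lemma expiD (a b : R) : expi (a + b) = expi a * expi b.
Proof. by rewrite /expi cosD sinD /=; simpc; rewrite [X in (_ +i* X)%C]addrC. Qed.

Lemma expi0 : expi (0 : R) = 1.
Proof. by rewrite /expi cos0 sin0. Qed.

Lemma expiNK (x : R) : expi (- x) * expi x = 1.
Proof. by rewrite -expiD addNr expi0. Qed.

Lemma expiMn n (x : R) : expi (n%:R * x) = expi x ^+ n.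
Proof.
elim: n => [|n IH]; first by rewrite mul0r expi0 expr0.
by rewrite -addn1 natrD mulrDl mul1r expiD IH addn1 exprSr.
Qed.

Lemma expi2pi_int (z : int) : expi (z%:~R * (pi *+ 2) : R) = 1.
Proof.
have h2 : expi (pi *+ 2 : R) = 1 by rewrite /expi cos2pi sin2pi.
case: z => n.
  by rewrite -pmulrn expiMn h2 expr1n.
rewrite NegzE mulrNz mulNr -pmulrn.
by have := expiNK (n.+1%:R * (pi *+ 2)); rewrite expiMn h2 expr1n mulr1.
Qed.

Lemma expi_neq1 (x : R) : 0 < `|x| < pi *+ 2 -> expi x != 1.
Proof.
move=> /andP[x0 x2]; apply/negP => /eqP [] hc _.
have : sin (x / 2) ^+ 2 = 0.
  have : cos x = 1 - 2 * sin (x / 2) ^+ 2.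
    rewrite {1}(splitr x) cosD -!expr2 cos2sin2; ring.
  rewrite hc => /eqP; rewrite eq_sym subr_eq addrC -subr_eq subrr eq_sym.
  by rewrite mulf_eq0 pnatr_eq0 /= => /eqP.
move/eqP; rewrite expf_eq0 /= => /eqP hs.
have hy : 0 < `|x / 2| < pi.
  have h2 : `|(2 : R)^-1| = 2^-1 by rewrite gtr0_norm // invr_gt0 ltr0n.
  rewrite normrM h2 divr_gt0 ?ltr0n //=.
  by rewrite ltr_pdivrMr ?ltr0n // mulr_natr.
case: (ltrgtP (x / 2) 0) => hx.
- move: hy; rewrite ltr0_norm // => /sin_gt0_pi; rewrite sinN hs oppr0 ltxx //.
- move: hy; rewrite gtr0_norm // => /sin_gt0_pi; rewrite hs ltxx //.
- by move: hy; rewrite hx normr0 ltxx.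
Qed.

Lemma sum_root (z : C) N : z != 1 -> z ^+ N = 1 -> \sum_(j < N) z ^+ j.+1 = 0.
Proof.
move=> z1 zN; have := subrX1 z N; rewrite zN subrr => /esym /eqP.
rewrite mulf_eq0 subr_eq0 (negbTE z1) /= => /eqP h.
transitivity (z * \sum_(i < N) z ^+ i); last by rewrite h mulr0.
by rewrite mulr_sumr; apply: eq_bigr => j _; rewrite exprS.
Qed.


Definition gpt (N j : nat) : R := - pi + (j.+1)%:R * (pi *+ 2 / N%:R).

Lemma grid_factor N (a : int) : (0 < N)%N -> (`|a| < N)%N ->
  \sum_(j < N) expi (a%:~R * gpt N j) = if a == 0 then N%:R else 0.
Proof.
move=> N0 aN; have Nr : (0 : R) < N%:R by rewrite ltr0n.
have pi0 : (0 : R) < pi *+ 2 by rewrite pmulrn_rgt0 // pi_gt0.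
case: eqP => [->|/eqP a0].
  under eq_bigr do rewrite mul0r expi0.
  by rewrite sumr_const card_ord.
set h := (pi *+ 2 / N%:R : R).
have -> : \sum_(j < N) expi (a%:~R * gpt N j) =
    expi (a%:~R * - pi) * \sum_(j < N) expi (a%:~R * h) ^+ j.+1.
  rewrite mulr_sumr; apply: eq_bigr => j _.
  by rewrite /gpt mulrDr -expiMn expiD /h mulrCA.
rewrite (@sum_root (expi (a%:~R * h)) N) ?mulr0 //.
  apply: expi_neq1.
  rewrite normrM (gtr0_norm (x := h)) ?divr_gt0 // -intr_norm -natr_absz.
  rewrite mulr_gt0 ?divr_gt0 ?ltr0n ?absz_gt0 //=.
  by rewrite /h mulrCA gtr_pMr // ltr_pdivrMr // mul1r ltr_nat.
rewrite -(expiMn N).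
have -> : (N%:R * (a%:~R * h) : R) = a%:~R * (pi *+ 2).
  by rewrite /h; field; rewrite gt_eqF.
exact: expi2pi_int.
Qed.


Definition grid d N (f : {ffun 'I_d -> 'I_N}) : d.-tuple R :=
  [tuple gpt N (f i) | i < d].
Arguments grid {d N}.

Lemma grid_torus d N (f : {ffun 'I_d -> 'I_N}) : (0 < N)%N -> torus (grid f).
Proof.
move=> N0 i; rewrite tnth_mktuple /gpt.
have Nr : (0 : R) < N%:R by rewrite ltr0n.
have pi0 : (0 : R) < pi *+ 2 by rewrite pmulrn_rgt0 // pi_gt0.
have hx : (0 : R) < (f i).+1%:R * (pi *+ 2 / N%:R) by rewrite mulr_gt0 ?divr_gt0 ?ltr0n.
have hx2 : (f i).+1%:R * (pi *+ 2 / N%:R) <= (pi *+ 2 : R).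
  rewrite mulrCA ler_piMr ?(ltW pi0) // ler_pdivrMr // mul1r ler_nat.
  by case: (f i).
move: hx hx2; set p := (pi : R); set x := (_ * _) => hx hx2.
rewrite mulr2n in hx2; apply/andP; split; lra.
Qed.

Lemma expi_sum (I : Type) (r : seq I) (P : pred I) (F : I -> R) :
  expi (\sum_(i <- r | P i) F i) = \prod_(i <- r | P i) expi (F i).
Proof. exact: (big_morph _ expiD expi0). Qed.

Lemma grid_kdot d N (k1 k2 : d.-tuple int) : (0 < N)%N ->
  (forall i, `|tnth k1 i - tnth k2 i| < N)%N ->
  \sum_(f : {ffun 'I_d -> 'I_N}) expi (kdot k1 (grid f)) * expi (- kdot k2 (grid f))
    = if k1 == k2 then N%:R ^+ d else 0.
Proof.
move=> N0 hk.
have -> : \sum_(f : {ffun 'I_d -> 'I_N}) expi (kdot k1 (grid f)) * expi (- kdot k2 (grid f))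
   = \sum_(f : {ffun 'I_d -> 'I_N}) \prod_i expi ((tnth k1 i - tnth k2 i)%:~R * gpt N (f i)).
  apply: eq_bigr => f _; rewrite -expiD /kdot -sumrB expi_sum.
  by apply: eq_bigr => i _; rewrite tnth_mktuple intrB mulrBl.
rewrite -(bigA_distr_bigA (fun i (j : 'I_N) => expi ((tnth k1 i - tnth k2 i)%:~R * gpt N j))) /=.
under eq_bigr do rewrite grid_factor //.
case: eqP => [->|/eqP ne].
  under eq_bigr do rewrite subrr eqxx.
  by rewrite prodr_const card_ord.
have [i hi] : exists i, tnth k1 i != tnth k2 i.
  apply/existsP; apply: contraR ne => /existsPn h; apply/eqP/eq_from_tnth => i.
  by apply/eqP; move: (h i); rewrite negbK.
by rewrite (bigD1 i) //= subr_eq0 (negbTE hi) mul0r.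
Qed.


Lemma Qfun_grid (d m : nat) (Lam : {fset d.-tuple int}) (Q : d.-tuple int -> 'M[C]_m)
  N k1 : (0 < N)%N -> k1 \in Lam ->
  (forall k, k \in Lam -> forall i, `|tnth k1 i - tnth k i| < N)%N ->
  \sum_(f : {ffun 'I_d -> 'I_N}) expi (kdot k1 (grid f)) *: Qfun Lam Q (grid f)
    = (N%:R ^+ d) *: Q k1.
Proof.
move=> N0 k1L hb; rewrite /Qfun.
under eq_bigr do rewrite scaler_sumr.
rewrite exchange_big /=.
under eq_bigr do (under eq_bigr do rewrite scalerA; rewrite -scaler_suml).
rewrite (bigD1_seq k1) ?fset_uniq //= (@grid_kdot d N k1 k1 N0); last first.
  by move=> i; apply: hb.
rewrite eqxx big1_seq ?addr0 // => k /andP[kk1 kL].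
rewrite (@grid_kdot d N k1 k N0); last by apply: hb.
by rewrite eq_sym (negbTE kk1) scale0r.
Qed.


Section Psd.
Variable m : nat.
Implicit Types (A B : 'M[C]_m).

Lemma psdD A B : psd A -> psd B -> psd (A + B).
Proof.
by move=> hA hB v; rewrite mulmxDr mulmxDl mxE; apply: addr_ge0; [apply: hA|apply: hB].
Qed.

Lemma qf_delta' A i j :
  ((delta_mx 0 i : 'rV[C]_m) *m A *m (delta_mx j 0 : 'cV[C]_m)) 0 0 = A i j.
Proof. by rewrite -rowE -colE !mxE. Qed.

Lemma qf_delta_mx A i j :
  (delta_mx 0 i : 'rV[C]_m) *m A *m (delta_mx j 0 : 'cV[C]_m) = (A i j)%:M.
Proof.
apply/matrixP => a b; rewrite [a]ord1 [b]ord1 qf_delta'.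
by rewrite [RHS]mxE eqxx mulr1n.
Qed.

Lemma qf_delta A i j :
  ((map_mx (@conjc R) (delta_mx i 0 : 'cV[C]_m))^T *m A *m (delta_mx j 0 : 'cV[C]_m)) 0 0 = A i j.
Proof. by rewrite map_delta_mx trmx_delta -rowE -colE !mxE. Qed.

Lemma psd_diag A i : psd A -> 0 <= A i i.
Proof. by move=> hA; have := hA (delta_mx i 0); rewrite qf_delta. Qed.

Lemma psd_tr A : psd A -> 0 <= \tr A.
Proof. by move=> hA; apply: sumr_ge0 => i _; apply: psd_diag. Qed.

Lemma qf_pair A i j (c : C) :
  let v : 'cV[C]_m := delta_mx i 0 + c *: delta_mx j 0 in
  ((map_mx (@conjc R) v)^T *m A *m v) 0 0 =
  A i i + c * A i j + (c^*)%C * A j i + (c^*)%C * c * A j j.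
Proof.
rewrite /=.
have -> : (map_mx (@conjc R) (delta_mx i 0 + c *: delta_mx j 0 : 'cV[C]_m))^T =
   delta_mx 0 i + (c^*)%C *: delta_mx 0 j.
  apply/matrixP => a b; rewrite [a]ord1 !mxE !eqxx /= ?andbT.
  by rewrite rmorphD rmorphM /= !conjc_nat.
rewrite mulmxDr !mulmxDl -!scalemxAl -!scalemxAr !qf_delta_mx !mxE !eqxx !mulr1n.
ring.
Qed.

Lemma psd_tr0 A : psd A -> \tr A = 0 -> A = 0.
Proof.
move=> hA htr.
have hd : forall i, A i i = 0.
  move=> i; apply: (psumr_eq0P (P := xpredT) (F := fun i => A i i)) => //.
  by move=> k _; apply: psd_diag.
apply/matrixP => i j; rewrite mxE.
case: (eqVneq i j) => [<-|ij]; first exact: hd.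
have q c : 0 <= c * A i j + (c^*)%C * A j i.
  have := hA (delta_mx i 0 + c *: delta_mx j 0).
  by rewrite qf_pair !hd mulr0 add0r addr0.
have ci : ('i%C)^*%C = - 'i%C :> C by apply/eqP; rewrite eq_complex /= oppr0 !eqxx.
have cm1 : ((-1 : C)^*)%C = -1 by rewrite rmorphN1.
have h1 := q 1; have h2 := q (-1); have h3 := q 'i%C; have h4 := q (- 'i%C).
rewrite conjc1 !mul1r in h1.
rewrite cm1 !mulN1r -opprD oppr_ge0 in h2.
rewrite ci mulNr -mulrBr in h3.
have cmi : ((- 'i%C)^*)%C = 'i%C :> C.
  by apply/eqP; rewrite eq_complex /= !oppr0 opprK !eqxx.
rewrite cmi mulNr addrC -mulrBr in h4.
have e1 : A i j + A j i = 0 by apply/eqP; rewrite eq_le h2 h1.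
have e2 : 'i%C * (A i j - A j i) = 0.
  apply/eqP; rewrite eq_le h3 andbT -oppr_ge0 -mulrN opprB //.
move/eqP: e2; rewrite mulf_eq0 subr_eq0 => /orP[|/eqP e3].
  by rewrite eq_complex /= oner_eq0 andbF.
by move/eqP: e1; rewrite e3 -mulr2n mulrn_eq0 /= => /eqP.
Qed.

End Psd.

Lemma key_pos (d m : nat) (Lam : {fset d.-tuple int}) (Q : d.-tuple int -> 'M[C]_m) :
  [tuple of nseq d 0%R] \in Lam ->
  (exists k, k \in Lam /\ Q k != 0) ->
  (forall th, torus th -> psd (Qfun Lam Q th)) ->
  0 < \tr (Q [tuple of nseq d 0%R]).
Proof.
set k0 := [tuple of nseq d 0%R] => k0L [kq [kqL Qkq]] hpsd.
set M := (\max_(k <- Lam) \max_(i < d) `|tnth k i|)%N.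
set N := M.*2.+1.
have N0 : (0 < N)%N by [].
have hM : forall k, k \in Lam -> forall i, (`|tnth k i| <= M)%N.
  move=> k kL i.
  have h1 := @leq_bigmax_seq _ (enum_fset Lam) xpredT (fun k => \max_(i < d) `|tnth k i|)%N k kL isT.
  apply: (leq_trans _ h1) => /=.
  by rewrite (bigD1 i) //= leq_maxl.
have hb : forall k1, k1 \in Lam -> forall k, k \in Lam -> forall i,
    (`|tnth k1 i - tnth k i| < N)%N.
  move=> k1 k1L k kL i; rewrite ltnS -addnn.
  apply: leq_trans (leqD_dist _ 0 _) _; rewrite subr0 sub0r abszN.
  by apply: leq_add; apply: hM.
have ID k1 : k1 \in Lam ->
    \sum_(f : {ffun 'I_d -> 'I_N}) expi (kdot k1 (grid f)) *: Qfun Lam Q (grid f)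
    = (N%:R ^+ d) *: Q k1.
  by move=> k1L; apply: Qfun_grid => //; apply: hb.
have c0 : (0 : C) < N%:R ^+ d by rewrite exprn_gt0 // ltr0n.
have ID0 : \sum_(f : {ffun 'I_d -> 'I_N}) Qfun Lam Q (grid f) = (N%:R ^+ d) *: Q k0.
  rewrite -(ID k0 k0L); apply: eq_bigr => f _.
  have -> : kdot k0 (grid f) = 0.
    by rewrite /kdot big1 // => i _; rewrite tnth_nseq mul0r.
  by rewrite expi0 scale1r.
have htr : N%:R ^+ d * \tr (Q k0) = \sum_(f : {ffun 'I_d -> 'I_N}) \tr (Qfun Lam Q (grid f)).
  by rewrite -mxtraceZ -ID0 raddf_sum.
have ge0 : 0 <= \sum_(f : {ffun 'I_d -> 'I_N}) \tr (Qfun Lam Q (grid f)).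
  by apply: sumr_ge0 => f _; apply: psd_tr; apply: hpsd; apply: grid_torus.
rewrite lt_def; apply/andP; split; last first.
  by rewrite -(pmulr_rge0 _ c0) htr.
apply/eqP => t0; move: htr; rewrite t0 mulr0 => /esym hs.
have hz : forall f : {ffun 'I_d -> 'I_N}, Qfun Lam Q (grid f) = 0.
  move=> f; apply: psd_tr0; first by apply: hpsd; apply: grid_torus.
  apply: (psumr_eq0P (P := xpredT) (F := fun f => \tr (Qfun Lam Q (grid f)))) => //.
  by move=> g _; apply: psd_tr; apply: hpsd; apply: grid_torus.
move: (ID kq kqL); under eq_bigr do rewrite hz scaler0.
rewrite big1 // => /esym /eqP; rewrite scaler_eq0 (negbTE Qkq) orbF.
by rewrite gt_eqF.
Qed.


Section Fam.
Variables (d m : nat) (Lam : {fset d.-tuple int}).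
Implicit Types (A B : 'M[C]_m) (Q S : d.-tuple int -> 'M[C]_m).

Lemma ctrD A B : ctr (A + B) = ctr A + ctr B.
Proof. by apply/matrixP => i j; rewrite !mxE rmorphD. Qed.

Lemma ctrN A : ctr (- A) = - ctr A.
Proof. by apply/matrixP => i j; rewrite !mxE rmorphN. Qed.

Lemma ctr0 : ctr (0 : 'M[C]_m) = 0.
Proof. by apply/matrixP => i j; rewrite !mxE rmorph0. Qed.

Lemma ctr_real (r : R) : ctr ((r%:C)%C%:M : 'M[C]_m) = (r%:C)%C%:M.
Proof.
apply/matrixP => i j; rewrite !mxE rmorphMn eq_sym; congr (_ *+ _).
by apply/eqP; rewrite eq_complex /= oppr0 !eqxx.
Qed.

Lemma fam_ipDr S Q1 Q2 :
  fam_ip Lam S (fun k => Q1 k + Q2 k) = fam_ip Lam S Q1 + fam_ip Lam S Q2.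
Proof.
rewrite /fam_ip -raddfD -big_split /=; congr complex.Re; apply: eq_bigr => k _.
by rewrite ctrD mulmxDr mxtraceD.
Qed.

Lemma fam_ipDl S1 S2 Q :
  fam_ip Lam (fun k => S1 k + S2 k) Q = fam_ip Lam S1 Q + fam_ip Lam S2 Q.
Proof.
rewrite /fam_ip -raddfD -big_split /=; congr complex.Re; apply: eq_bigr => k _.
by rewrite mulmxDl mxtraceD.
Qed.

Lemma fam_ipNl S Q : fam_ip Lam (fun k => - S k) Q = - fam_ip Lam S Q.
Proof.
rewrite /fam_ip -raddfN -sumrN /=; congr complex.Re; apply: eq_bigr => k _.
by rewrite mulNmx raddfN.
Qed.

Lemma QfunD Q1 Q2 th : Qfun Lam (fun k => Q1 k + Q2 k) th = Qfun Lam Q1 th + Qfun Lam Q2 th.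
Proof. by rewrite /Qfun -big_split; apply: eq_bigr => k _; rewrite scalerDr. Qed.

Lemma is_familyD Q1 Q2 : is_family Lam Q1 -> is_family Lam Q2 ->
  is_family Lam (fun k => Q1 k + Q2 k).
Proof. by move=> h1 h2 k kL; rewrite h1 // h2 // ctrD. Qed.

End Fam.

Lemma negkK d (k : d.-tuple int) : negk (negk k) = k.
Proof. by apply: eq_from_tnth => i; rewrite !tnth_map opprK. Qed.

Lemma negk0 d : negk [tuple of nseq d (0 : int)] = [tuple of nseq d 0].
Proof. by apply: eq_from_tnth => i; rewrite !tnth_map !tnth_nseq oppr0. Qed.

Lemma negk_eq0 d (k : d.-tuple int) :
  (negk k == [tuple of nseq d 0]) = (k == [tuple of nseq d 0]).
Proof.
apply/eqP/eqP => [h|->]; last exact: negk0.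
by rewrite -(negkK _ k) h negk0.
Qed.

End S.

Theorem lemma7p1 (R : realType) (d m nu : nat)
  (Lam : {fset d.-tuple int})
  (Sigma : d.-tuple int -> 'M[complex R]_m)
  (Psi : d.-tuple R -> 'M[complex R]_m)
  (Q0 SK : d.-tuple int -> 'M[complex R]_m) :
  (1 <= d)%N -> (1 <= m)%N -> (2 <= nu)%N ->
  [tuple of nseq d 0%R] \in Lam ->
  (forall k, k \in Lam -> negk k \in Lam) ->
  is_family Lam Sigma ->
  rational_entries Psi ->
  bounded_coercive Psi ->
  feasible Lam Sigma ->
  (* Q0 is the unique minimizer of J_nu over L_+, and lies in the boundary of L_+ *)
  Lplus nu Lam Psi Q0 ->
  (forall Q, Lplus nu Lam Psi Q -> (J_nu nu Lam Psi Sigma Q0 <= J_nu nu Lam Psi Sigma Q)%E) ->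
  (forall Q, Lplus nu Lam Psi Q -> (J_nu nu Lam Psi Sigma Q <= J_nu nu Lam Psi Sigma Q0)%E ->
     fam_eq Lam Q Q0) ->
  dLplus nu Lam Psi Q0 ->
  normal_cone nu Lam Psi Q0 SK ->
  fam_closure Lam (Cplus Lam) (fun k => - SK k).
Proof.
move=> _ _ _ k0L _ _ _ _ _ [famQ0 [psdQ0 [th0 [th0T th0nz]]]] _ _ _ [famSK hNC] eps eps0.
set k0 := [tuple of nseq d (0 : int)].
have hneg : forall Q, is_family Lam Q -> (forall th, torus th -> psd (Qfun Lam Q th)) ->
    fam_ip Lam SK Q <= 0.
  move=> Q famQ psdQ.
  have key : forall Q', is_family Lam Q' -> (forall th, torus th -> psd (Qfun Lam Q' th)) ->
      (nu%:R : complex R) *: invmx (Psi th0) + Qfun Lam (fun k => Q0 k + Q' k) th0 != 0 ->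
      fam_ip Lam SK Q' <= 0.
    move=> Q' famQ' psdQ' nz.
    have := hNC (fun k => Q0 k + Q' k).
    have -> : (fun k => Q0 k + Q' k - Q0 k) = Q'.
      by apply/funext => k; rewrite addrAC subrr add0r.
    apply; split; first exact: is_familyD.
    split; last by exists th0.
    move=> th thT; rewrite QfunD addrA; apply: psdD; [exact: psdQ0|exact: psdQ'].
  have [nz|/negPn z] := boolP ((nu%:R : complex R) *: invmx (Psi th0) +
                                 Qfun Lam (fun k => Q0 k + Q k) th0 != 0).
    exact: key.
  have : fam_ip Lam SK (fun k => Q k + Q k) <= 0.
    apply: key; first exact: is_familyD.
      by move=> th thT; rewrite QfunD; apply: psdD; apply: psdQ.
    move: z; rewrite !QfunD addrA => /eqP z.
    rewrite addrA (addrA (_ + _)) z add0r.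
    by apply: contra th0nz => /eqP h; apply/eqP; move: z; rewrite h addr0.
  by rewrite fam_ipDr; lra.
set cc : complex R := ((eps / 2)%:C)%C.
set E : d.-tuple int -> 'M[complex R]_m := fun k => if k == k0 then cc%:M else 0.
have cc0 : 0 < cc by rewrite ltcR divr_gt0.
exists (fun k => - SK k + E k); split; first split.
- move=> k kL; rewrite ctrD ctrN famSK //; congr (_ + _).
  rewrite /E negk_eq0; case: ifP => _; last exact/esym/ctr0.
  by rewrite ctr_real.
- move=> Q famQ nzQ psdQ.
  rewrite fam_ipDl fam_ipNl.
  have h1 := hneg Q famQ psdQ.
  have h2 : 0 < fam_ip Lam E Q.
    rewrite /fam_ip (bigD1_seq k0) ?fset_uniq //= big1_seq ?addr0; last first.
      by move=> k /andP[kk0 _]; rewrite /E (negbTE kk0) mul0mx raddf0.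
    rewrite /E eqxx.
    have -> : ctr (Q k0) = Q k0 by rewrite -famQ // negk0.
    rewrite mul_scalar_mx mxtraceZ.
    have := mulr_gt0 cc0 (@key_pos R d m Lam Q k0L nzQ psdQ : 0 < \tr (Q k0)).
    by rewrite ltcE /= => /andP[_].
  lra.
- move=> k kL i j; rewrite !mxE opprK addrAC addNr add0r.
  have hcc : `|cc| < (eps%:C)%C.
    rewrite gtr0_norm // ltcR; lra.
  apply: le_lt_trans hcc; rewrite /E; case: ifP => _; rewrite mxE; last first.
    by rewrite normr0 normr_ge0.
  by case: (i == j); rewrite ?mulr1n ?mulr0n ?normr0 ?normr_ge0.
Qed.
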